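(* Let $\alpha,\beta\in\mathbb{C}$ with $\Re(\alpha)>-1$ and $\Re(\beta)>-1$, and let $t\in\mathbb{C}$. Then for all $z\in\mathbb{C}$ with $|z|<1$, $$\frac{\partial }{\partial z} {\rm B}_{n}^{(\alpha ,\beta )} (z,1)-\frac{t}{1+\alpha}\, {\rm B}_{n}^{(1+\alpha ,\beta )} (z,1)-\frac{t}{1+\beta}\, {\rm B}_{n}^{(\alpha ,1+\beta )} (z,1)=0 .$$
   Context: For $\lambda\in\mathbb{C}$ and an integer $m\ge 0$, $(\lambda)_m$ denotes the Pochhammer symbol: $(\lambda)_0=1$ and $(\lambda)_m=\lambda(\lambda+1)\cdots(\lambda+m-1)$ for $m\ge1$. For a fixed parameter $t\in\mathbb{C}$ and $\alpha,\beta\in\mathbb{C}$ with $\Re(\alpha)>-1$, $\Re(\beta)>-1$, define $${\rm B}_{n}^{(\alpha ,\beta )} (z,1)=\left[\sum _{m=0}^{\infty } \frac{\tfrac{1}{2} \left(z-1 \right)^{m} t^{m}}{m!\,(1+\alpha)_{m} } \right]\left[\sum _{m=0}^{\infty }\frac{\tfrac{1}{2} \left(z+1 \right)^{m} t^{m}}{m!\,(1+\beta)_{m} } \right]$$ (the index $n$ is nominal; the right-hand side does not depend on it). ${\rm B}_{n}^{(1+\alpha ,\beta)}(z,1)$ and ${\rm B}_{n}^{(\alpha ,1+\beta)}(z,1)$ denote the same function with $\alpha$ replaced by $1+\alpha$, respectively $\beta$ replaced by $1+\beta$. *)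

(* Defs.v *)
From Stdlib Require Import Reals Factorial.
From Coquelicot Require Export Coquelicot.
Open Scope C_scope.

Fixpoint poch (l : C) (m : nat) : C :=
  match m with
  | O => 1
  | S k => poch l k * (l + RtoC (INR k))
  end.

Definition CSeries (a : nat -> C) : C :=
  (Series (fun n => Re (a n)), Series (fun n => Im (a n))).

Definition Bterm (t a w : C) (m : nat) : C :=
  (/ 2) * Cpow w m * Cpow t m / (RtoC (INR (fact m)) * poch (1 + a) m).

(* B_n^{(alpha,beta)}(z,1); the index n is nominal and omitted. *)
Definition Bfun (t alpha beta z : C) : C :=
  CSeries (Bterm t alpha (z - 1)) * CSeries (Bterm t beta (z + 1)).

(* Main.v *)
Require Import Defs.
From Stdlib Require Import Reals.
From Coquelicot Require Import Coquelicot.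
From Stdlib Require Import Lra Lia Factorial.
Open Scope C_scope.

Definition absum (a : nat -> C) := ex_series (fun m => Cmod (a m)).

Lemma im_le_Cmod' (c : C) : (Rabs (Im c) <= Cmod c)%R.
Proof.
  destruct c as [x y]; unfold Cmod; simpl.
  rewrite <- sqrt_Rsqr_abs. apply sqrt_le_1_alt. unfold Rsqr. nra.
Qed.

Lemma absum_Re a : absum a -> ex_series (fun m => Re (a m)).
Proof.
  intros H. apply (@ex_series_le R_AbsRing R_CompleteNormedModule _ (fun m => Cmod (a m))); [|exact H]. intros n. apply re_le_Cmod.
Qed.
Lemma absum_Im a : absum a -> ex_series (fun m => Im (a m)).
Proof.
  intros H. apply (@ex_series_le R_AbsRing R_CompleteNormedModule _ (fun m => Cmod (a m))); [|exact H]. intros n. apply im_le_Cmod'.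
Qed.

Lemma Cmod_le_sum (c : C) : (Cmod c <= Rabs (Re c) + Rabs (Im c))%R.
Proof.
  destruct c as [x y]; unfold Cmod; simpl.
  pose proof (Rabs_pos x). pose proof (Rabs_pos y).
  rewrite <- (sqrt_Rsqr (Rabs x + Rabs y)) by lra. apply sqrt_le_1_alt. unfold Rsqr.
  pose proof (Rsqr_abs x) as Hx. pose proof (Rsqr_abs y) as Hy. unfold Rsqr in Hx, Hy. nra.
Qed.

Lemma CSeries_bound a : absum a ->
  (Cmod (CSeries a) <= 2 * Series (fun m => Cmod (a m)))%R.
Proof.
  intros H. eapply Rle_trans. apply Cmod_le_sum. unfold CSeries; simpl.
  assert (H1 : (Rabs (Series (fun n => Re (a n))) <= Series (fun m => Cmod (a m)))%R).
  { eapply Rle_trans. apply Series_Rabs.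
    apply (@ex_series_le R_AbsRing R_CompleteNormedModule _ (fun m => Cmod (a m))); [|exact H]. intros n.
    unfold norm; simpl; unfold abs; simpl. rewrite Rabs_Rabsolu. apply re_le_Cmod.
    apply Series_le; auto. intros n; split. apply Rabs_pos. apply re_le_Cmod. }
  assert (H2 : (Rabs (Series (fun n => Im (a n))) <= Series (fun m => Cmod (a m)))%R).
  { eapply Rle_trans. apply Series_Rabs.
    apply (@ex_series_le R_AbsRing R_CompleteNormedModule _ (fun m => Cmod (a m))); [|exact H]. intros n.
    unfold norm; simpl; unfold abs; simpl. rewrite Rabs_Rabsolu. apply im_le_Cmod'.
    apply Series_le; auto. intros n; split. apply Rabs_pos. apply im_le_Cmod'. }
  lra.
Qed.

Lemma absum_minus a b : absum a -> absum b -> absum (fun m => a m - b m).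
Proof.
  intros Ha Hb. apply (@ex_series_le R_AbsRing R_CompleteNormedModule _ (fun m => Cmod (a m) + Cmod (b m))%R).
  intros n. unfold norm; simpl; unfold abs; simpl. rewrite Rabs_pos_eq by apply Cmod_ge_0.
  unfold Cminus. eapply Rle_trans. apply Cmod_triangle. rewrite Cmod_opp. lra.
  apply (@ex_series_plus R_AbsRing R_NormedModule _ _ Ha Hb).
Qed.

Lemma CSeries_minus a b : absum a -> absum b ->
  CSeries (fun m => a m - b m) = CSeries a - CSeries b.
Proof.
  intros Ha Hb. unfold CSeries, Cminus, Cplus, Copp; simpl.
  f_equal.
  - rewrite <- Series_opp, <- Series_plus. apply Series_ext; intros; unfold Re, Im; simpl; ring.
    apply absum_Re; auto. apply (@ex_series_opp R_AbsRing R_NormedModule (fun n => Re (b n))). apply absum_Re; auto.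
  - rewrite <- Series_opp, <- Series_plus. apply Series_ext; intros; unfold Re, Im; simpl; ring.
    apply absum_Im; auto. apply (@ex_series_opp R_AbsRing R_NormedModule (fun n => Im (b n))). apply absum_Im; auto.
Qed.

Lemma CSeries_scal k a : absum a ->
  CSeries (fun m => k * a m) = k * CSeries a.
Proof.
  intros Ha. unfold CSeries, Cmult; simpl. destruct k as [p q]; simpl.
  pose proof (absum_Re a Ha). pose proof (absum_Im a Ha).
  f_equal.
  - rewrite <- !Series_scal_l, <- Series_minus. apply Series_ext; intros; unfold Re, Im; simpl; ring.
    apply (@ex_series_scal_l R_AbsRing R_NormedModule); auto. apply (@ex_series_scal_l R_AbsRing R_NormedModule); auto.
  - rewrite <- !Series_scal_l, <- Series_plus. apply Series_ext; intros; unfold Re, Im; simpl; ring.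
    apply (@ex_series_scal_l R_AbsRing R_NormedModule); auto. apply (@ex_series_scal_l R_AbsRing R_NormedModule); auto.
Qed.

Lemma CSeries_incr a : absum a -> CSeries a = a 0%nat + CSeries (fun m => a (S m)).
Proof.
  intros Ha. unfold CSeries, Cplus; simpl. f_equal; apply Series_incr_1.
  apply absum_Re; auto. apply absum_Im; auto.
Qed.

Lemma CSeries_ext a b : (forall m, a m = b m) -> CSeries a = CSeries b.
Proof. intros H. unfold CSeries. f_equal; apply Series_ext; intros; now rewrite H. Qed.

Definition Pm (w h : C) (m : nat) := (w+h)^m - w^m - h * INR m * w^(pred m).

Lemma Pm_rec w h m : Pm w h (S m) = h * h * INR m * w^(pred m) + (w + h) * Pm w h m.
Proof.
  unfold Pm. destruct m as [|k].
  - simpl. ring.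
  - replace (pred (S (S k))) with (S k) by reflexivity. replace (pred (S k)) with k by reflexivity.
    rewrite !S_INR, !RtoC_plus. simpl Cpow. ring.
Qed.

Lemma Cpow_le w r m : (Cmod w <= r)%R -> (1 <= r)%R -> (Cmod (w ^ m) <= r ^ m)%R.
Proof.
  intros. rewrite Cmod_pow. apply pow_incr. split; auto. apply Cmod_ge_0.
Qed.

Lemma pow_mono_r r m n : (1 <= r)%R -> (m <= n)%nat -> (r ^ m <= r ^ n)%R.
Proof. intros. apply Rle_pow; auto. Qed.

Lemma poly_bound w h r m : (Cmod w + Cmod h <= r)%R -> (1 <= r)%R ->
  (Cmod (Pm w h m) <= INR m ^ 2 * Cmod h ^ 2 * r ^ m)%R.
Proof.
  intros Hr H1. pose proof (Cmod_ge_0 w). pose proof (Cmod_ge_0 h).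
  induction m as [|k IH].
  - unfold Pm. simpl. replace (1 - 1 - h * 0 * 1) with (RtoC 0).
    rewrite Cmod_0. lra. unfold RtoC; simpl. apply injective_projections; simpl; ring.
  - rewrite Pm_rec. eapply Rle_trans. apply Cmod_triangle.
    rewrite !Cmod_mult, Cmod_R, Rabs_pos_eq by apply pos_INR.
    assert (Hw : (Cmod (w ^ pred k) <= r ^ k)%R).
    { apply Rle_trans with (r ^ pred k)%R. apply Cpow_le; lra. apply pow_mono_r; [lra|lia]. }
    assert (Hwh : (Cmod (w + h) <= r)%R). { eapply Rle_trans. apply Cmod_triangle. lra. }
    assert (Hrk : (r ^ k <= r ^ S k)%R). { apply pow_mono_r; [lra|lia]. }
    assert (0 <= r ^ k)%R by (apply pow_le; lra).
    pose proof (pos_INR k). pose proof (Cmod_ge_0 (Pm w h k)).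
    pose proof (Cmod_ge_0 (w ^ pred k)). pose proof (Cmod_ge_0 (w+h)).
    rewrite S_INR. simpl pow in *.
    assert (A1 : (Cmod h * Cmod h * INR k * Cmod (w ^ pred k) <= Cmod h * Cmod h * INR k * (r * r^k))%R).
    { apply Rmult_le_compat_l. apply Rmult_le_pos; [nra|lra]. lra. }
    assert (A2 : (Cmod (w + h) * Cmod (Pm w h k) <= r * (INR k * (INR k * 1) * (Cmod h * (Cmod h * 1)) * r ^ k))%R).
    { apply Rmult_le_compat; auto. }
    assert (0 <= Cmod h * Cmod h * r * r^k)%R. { repeat apply Rmult_le_pos; lra. }
    nra.
Qed.

Lemma INR_le_2pow m : (INR m <= 2 ^ m)%R.
Proof.
  induction m. simpl; lra. rewrite S_INR. simpl.
  assert (1 <= 2 ^ m)%R by (apply pow_R1_Rle; lra). lra.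
Qed.

Lemma exp_ex x : ex_series (fun m => x ^ m / INR (fact m))%R.
Proof.
  exists (exp x). pose proof (is_exp_Reals x) as H. unfold is_pseries in H.
  eapply is_series_ext; [|exact H]. intros n. simpl. rewrite pow_n_pow. reflexivity.
Qed.

Lemma coef_sum (c : nat -> C) A R : (0 <= A)%R -> (0 <= R)%R ->
  (forall m, Cmod (c m) <= A ^ m / INR (fact m))%R ->
  ex_series (fun m => Cmod (c m) * INR m ^ 2 * R ^ m)%R.
Proof.
  intros HA HR Hc.
  apply (@ex_series_le R_AbsRing R_CompleteNormedModule _ (fun m => (4*A*R) ^ m / INR (fact m))%R); [|apply exp_ex].
  intros n. unfold norm; simpl; unfold abs; simpl.
  pose proof (Cmod_ge_0 (c n)). pose proof (pos_INR n).
  assert (0 <= R ^ n)%R by (apply pow_le; lra).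
  rewrite Rabs_pos_eq by (apply Rmult_le_pos; [apply Rmult_le_pos; [lra| nra] | lra]).
  rewrite !Rpow_mult_distr.
  assert (H4 : (INR n ^ 2 <= 4 ^ n)%R).
  { replace 4%R with (2^2)%R by (simpl; ring). rewrite <- pow_mult, Nat.mul_comm, pow_mult.
    apply pow_incr. split; auto. apply INR_le_2pow. }
  specialize (Hc n). unfold Rdiv in *.
  assert (0 < / INR (fact n))%R by (apply Rinv_0_lt_compat, INR_fact_lt_0).
  assert (0 <= A ^ n)%R by (apply pow_le; lra).
  assert (0 <= INR n ^ 2)%R by (apply pow_le; lra).
  apply Rle_trans with (A ^ n * / INR (fact n) * 4 ^ n * R ^ n)%R.
  - apply Rmult_le_compat_r; auto. apply Rmult_le_compat; auto.
  - right; ring.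
Qed.

Lemma coef_sum0 (c : nat -> C) A R : (0 <= A)%R -> (0 <= R)%R ->
  (forall m, Cmod (c m) <= A ^ m / INR (fact m))%R ->
  ex_series (fun m => Cmod (c m) * R ^ m)%R.
Proof.
  intros HA HR Hc.
  apply (@ex_series_le R_AbsRing R_CompleteNormedModule _ (fun m => (A*R) ^ m / INR (fact m))%R); [|apply exp_ex].
  intros n. unfold norm; simpl; unfold abs; simpl.
  pose proof (Cmod_ge_0 (c n)).
  assert (0 <= R ^ n)%R by (apply pow_le; lra).
  rewrite Rabs_pos_eq by (apply Rmult_le_pos; lra).
  rewrite !Rpow_mult_distr.
  specialize (Hc n). unfold Rdiv in *.
  apply Rle_trans with (A ^ n * / INR (fact n) * R ^ n)%R.
  - apply Rmult_le_compat_r; auto.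
  - right; ring.
Qed.

Definition ps (c : nat -> C) (w : C) := CSeries (fun m => c m * w ^ m).
Definition dps (c : nat -> C) (w : C) := CSeries (fun m => c m * INR m * w ^ pred m).

Lemma absum_scal k a : absum a -> absum (fun m => k * a m).
Proof.
  intros H. apply (@ex_series_le R_AbsRing R_CompleteNormedModule _ (fun m => Cmod k * Cmod (a m))%R).
  intros n. unfold norm; simpl; unfold abs; simpl. rewrite Rabs_pos_eq by apply Cmod_ge_0.
  rewrite Cmod_mult; lra.
  apply (@ex_series_scal_l R_AbsRing R_NormedModule); auto.
Qed.

Section PS.
Variable c : nat -> C.
Variable A : R.
Hypothesis HA : (0 <= A)%R.
Hypothesis Hc : forall m, (Cmod (c m) <= A ^ m / INR (fact m))%R.

Lemma absum_ps y : absum (fun m => c m * y ^ m).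
Proof.
  unfold absum. eapply ex_series_ext; [|apply (coef_sum0 c A (Cmod y)); auto; apply Cmod_ge_0].
  intros n. simpl. rewrite Cmod_mult, Cmod_pow. reflexivity.
Qed.

Lemma absum_dps w : absum (fun m => c m * INR m * w ^ pred m).
Proof.
  unfold absum.
  apply (@ex_series_le R_AbsRing R_CompleteNormedModule _ (fun m => Cmod (c m) * INR m ^ 2 * (Cmod w + 1) ^ m)%R).
  2:{ apply (coef_sum c A); auto. pose proof (Cmod_ge_0 w); lra. }
  intros n. unfold norm; simpl; unfold abs; simpl. rewrite Rabs_pos_eq by apply Cmod_ge_0.
  rewrite !Cmod_mult, Cmod_R, Rabs_pos_eq by apply pos_INR.
  pose proof (Cmod_ge_0 (c n)). pose proof (pos_INR n). pose proof (Cmod_ge_0 w).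
  assert (Hp1 : (Cmod (w ^ pred n) <= (Cmod w + 1) ^ n)%R).
  { apply Rle_trans with ((Cmod w + 1) ^ pred n)%R. apply Cpow_le; lra. apply pow_mono_r; [lra|lia]. }
  assert (Hp2 : (INR n <= INR n ^ 2)%R).
  { destruct n. simpl; lra. rewrite S_INR. pose proof (pos_INR n). simpl. nra. }
  pose proof (Cmod_ge_0 (w ^ pred n)).
  apply Rle_trans with (Cmod (c n) * INR n * (Cmod w + 1) ^ n)%R.
  apply Rmult_le_compat_l; auto. apply Rmult_le_pos; auto.
  apply Rmult_le_compat_r. apply pow_le; lra. apply Rmult_le_compat_l; auto.
Qed.

Lemma ps_derive w : is_derive (ps c) w (dps c w).
Proof.
  split. apply is_linear_scal_l.
  intros x Hx. assert (Hwx : w = x) by (first [exact (@is_filter_lim_locally_unique C_AbsRing C_NormedModule w x Hx) | exact (@is_filter_lim_locally_unique C_AbsRing (AbsRing_NormedModule C_AbsRing) w x Hx)]). subst x.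
  intros eps.
  set (r := (Cmod w + 2)%R).
  set (K := Series (fun m => Cmod (c m) * INR m ^ 2 * r ^ m)%R).
  assert (HK : ex_series (fun m => Cmod (c m) * INR m ^ 2 * r ^ m)%R).
  { apply (coef_sum c A); auto. unfold r; pose proof (Cmod_ge_0 w); lra. }
  set (d := Rmin 1 (eps / (2 * Rabs K + 1))).
  assert (Hd : (0 < d)%R).
  { unfold d. apply Rmin_glb_lt. lra. apply Rdiv_lt_0_compat. apply cond_pos.
    pose proof (Rabs_pos K); lra. }
  eapply filter_imp; [|apply (locally_ball_norm w (mkposreal d Hd))].
  intros y Hy. change C in y. unfold ball_norm in Hy. simpl in Hy.
  change (norm (minus y w)) with (Cmod (y - w)) in *.
  change (norm (minus (minus (ps c y) (ps c w)) (scal (minus y w) (dps c w))))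
    with (Cmod (ps c y - ps c w - (y - w) * dps c w)).
  assert (Hy' : @eq C y (w + (y - w))) by ring.
  set (h := y - w) in *. rewrite Hy'. clearbody h. clear Hy'.
  assert (Hh1 : (Cmod h <= 1)%R). { pose proof (Rmin_l 1 (eps / (2 * Rabs K + 1))). fold d in H. lra. }
  assert (Hh2 : (Cmod h <= eps / (2 * Rabs K + 1))%R). { pose proof (Rmin_r 1 (eps / (2 * Rabs K + 1))). fold d in H. lra. }
  assert (Hr : (Cmod w + Cmod h <= r)%R) by (unfold r; lra).
  assert (Hr1 : (1 <= r)%R) by (unfold r; pose proof (Cmod_ge_0 w); lra).
  assert (Hbd : forall n, (0 <= Cmod (c n * Pm w h n) <= Cmod h ^ 2 * (Cmod (c n) * INR n ^ 2 * r ^ n))%R).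
  { intros n. split. apply Cmod_ge_0. rewrite Cmod_mult.
    pose proof (poly_bound w h r n Hr Hr1). pose proof (Cmod_ge_0 (c n)).
    apply Rle_trans with (Cmod (c n) * (INR n ^ 2 * Cmod h ^ 2 * r ^ n))%R.
    apply Rmult_le_compat_l; auto. right; ring. }
  assert (Hex : ex_series (fun n => Cmod h ^ 2 * (Cmod (c n) * INR n ^ 2 * r ^ n))%R).
  { apply (@ex_series_scal_l R_AbsRing R_NormedModule); auto. }
  assert (Habs : absum (fun n => c n * Pm w h n)).
  { unfold absum. apply (@ex_series_le R_AbsRing R_CompleteNormedModule _ (fun n => (Cmod h ^ 2 * (Cmod (c n) * INR n ^ 2 * r ^ n))%R)); [|exact Hex].
    intros n. unfold norm; simpl; unfold abs; simpl. rewrite Rabs_pos_eq by apply Cmod_ge_0. apply Hbd. }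
  assert (Heq : ps c (w + h) - ps c w - h * dps c w = CSeries (fun n => c n * Pm w h n)).
  { unfold ps, dps. rewrite <- CSeries_minus, <- CSeries_scal, <- CSeries_minus.
    all: first [ apply absum_ps | apply absum_dps | (apply absum_minus; apply absum_ps) | (apply absum_scal, absum_dps) | (apply CSeries_ext; intros; unfold Pm; ring) ]. }
  rewrite Heq.
  eapply Rle_trans. apply CSeries_bound; auto.
  assert (HS : (Series (fun n => Cmod (c n * Pm w h n)) <= Cmod h ^ 2 * K)%R).
  { unfold K. rewrite <- Series_scal_l. apply Series_le; auto. }
  pose proof (Cmod_ge_0 h). pose proof (Rabs_pos K). pose proof (Rle_abs K).
  assert (Hkey : (Cmod h * (2 * Rabs K + 1) <= eps)%R).
  { apply Rmult_le_reg_r with (/ (2 * Rabs K + 1))%R. apply Rinv_0_lt_compat; lra.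
    rewrite Rmult_assoc, Rinv_r by lra. rewrite Rmult_1_r. exact Hh2. }
  simpl in HS. nra.
Qed.
End PS.

Lemma RtoC_nz (x : R) : x <> 0%R -> RtoC x <> 0.
Proof. intros H E. apply H. unfold RtoC in E. injection E. auto. Qed.

Lemma poch_S l m : poch l (S m) = l * poch (l + 1) m.
Proof.
  induction m as [|k IH].
  - simpl. ring.
  - change (poch l (S (S k))) with (poch l (S k) * (l + INR (S k))).
    rewrite IH. simpl poch. rewrite S_INR, RtoC_plus. ring.
Qed.

Lemma poch_bound l m : (0 < Re l)%R ->
  (Rmin (Re l) 1 ^ m * INR (fact m) <= Cmod (poch l m))%R.
Proof.
  intros Hl. set (mu := Rmin (Re l) 1).
  assert (Hmu : (0 < mu)%R) by (unfold mu; apply Rmin_glb_lt; lra).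
  assert (Hmu1 : (mu <= Re l)%R) by apply Rmin_l.
  assert (Hmu2 : (mu <= 1)%R) by apply Rmin_r.
  induction m as [|k IH].
  - simpl. rewrite Cmod_1. lra.
  - simpl poch. rewrite Cmod_mult. rewrite fact_simpl, mult_INR, S_INR.
    assert (H1 : (mu * (INR k + 1) <= Cmod (l + INR k))%R).
    { eapply Rle_trans; [|apply re_le_Cmod]. eapply Rle_trans; [|apply Rle_abs].
      unfold Re at 1; simpl. change (fst l) with (Re l). pose proof (pos_INR k). nra. }
    pose proof (pos_INR k). pose proof (INR_fact_lt_0 k).
    assert (0 <= mu ^ k)%R by (apply pow_le; lra).
    simpl pow.
    apply Rle_trans with ((mu ^ k * INR (fact k)) * (mu * (INR k + 1)))%R.
    right; ring.
    apply Rmult_le_compat; auto. apply Rmult_le_pos; lra. apply Rmult_le_pos; lra.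
Qed.

Lemma poch_nz l m : (0 < Re l)%R -> poch l m <> 0.
Proof.
  intros Hl. apply Cmod_gt_0. eapply Rlt_le_trans; [|apply poch_bound; auto].
  apply Rmult_lt_0_compat. apply pow_lt. apply Rmin_glb_lt; lra. apply INR_fact_lt_0.
Qed.

Definition coefB (t a : C) (m : nat) : C := / 2 * t ^ m / (INR (fact m) * poch (1 + a) m).

Lemma coefB_bound t a : (Re a > -1)%R ->
  forall m, (Cmod (coefB t a m) <= (Cmod t / Rmin (Re (1 + a)) 1) ^ m / INR (fact m))%R.
Proof.
  intros Ha m. assert (Hl : (0 < Re (1 + a))%R) by (unfold Re in *; simpl; lra).
  set (mu := Rmin (Re (1+a)) 1).
  assert (Hmu : (0 < mu)%R) by (unfold mu; apply Rmin_glb_lt; lra).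
  pose proof (poch_bound (1 + a) m Hl) as Hp. fold mu in Hp.
  pose proof (INR_fact_lt_0 m) as HF.
  assert (HF1 : (1 <= INR (fact m))%R).
  { replace 1%R with (INR 1) by reflexivity. apply le_INR. pose proof (lt_O_fact m). lia. }
  assert (Hpn : poch (1 + a) m <> 0) by (apply poch_nz; auto).
  assert (HFn : RtoC (INR (fact m)) <> 0) by (apply RtoC_nz; lra).
  unfold coefB, Cdiv. rewrite !Cmod_mult, !Cmod_inv by (first [apply Cmult_neq_0; auto | apply RtoC_nz; lra | (intro E; injection E; lra)]).
  rewrite !Cmod_mult, !Cmod_R, Cmod_pow.
  rewrite Rabs_pos_eq by lra. rewrite Rabs_pos_eq by lra.
  set (P := Cmod (poch (1 + a) m)) in *. set (F := INR (fact m)) in *. set (T := (Cmod t ^ m)%R).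
  assert (0 <= T)%R by (apply pow_le, Cmod_ge_0).
  assert (0 < mu ^ m)%R by (apply pow_lt; auto).
  unfold Rdiv. rewrite Rpow_mult_distr, pow_inv. fold T.
  assert (HP : (0 < P)%R) by nra.
  assert (H1 : (/ (F * P) <= / (mu ^ m * F))%R).
  { apply Rinv_le_contravar. nra. nra. }
  rewrite !Rinv_mult in H1. rewrite Rinv_mult.
  assert (0 < / P)%R by (apply Rinv_0_lt_compat; auto).
  assert (0 < / F)%R by (apply Rinv_0_lt_compat; auto).
  assert (0 < / mu ^ m)%R by (apply Rinv_0_lt_compat; auto).
  apply Rle_trans with (T * (/ F * / P))%R.
  { assert (0 <= / F * / P)%R by nra. nra. }
  apply Rle_trans with (T * (/ mu ^ m * / F))%R.
  { apply Rmult_le_compat_l; auto. }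
  right; ring.
Qed.

Lemma Bterm_eq t a w m : Bterm t a w m = coefB t a m * w ^ m.
Proof. unfold Bterm, coefB, Cdiv. ring. Qed.

Lemma CS_ps t a w : CSeries (Bterm t a w) = ps (coefB t a) w.
Proof. unfold ps. apply CSeries_ext. intros; apply Bterm_eq. Qed.

Lemma coefB_shift t a m : (Re a > -1)%R ->
  coefB t a (S m) * INR (S m) = t / (1 + a) * coefB t (1 + a) m.
Proof.
  intros Ha. assert (Hl : (0 < Re (1 + a))%R) by (unfold Re in *; simpl; lra).
  assert (Hl2 : (0 < Re (1 + (1 + a)))%R) by (unfold Re in *; simpl; lra).
  unfold coefB. rewrite poch_S. replace (1 + a + 1) with (1 + (1 + a)) by ring.
  rewrite fact_simpl, mult_INR, RtoC_mult.
  pose proof (poch_nz _ m Hl2). 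
  assert (RtoC (INR (S m)) <> 0) by (apply RtoC_nz; apply not_0_INR; lia).
  assert (RtoC (INR (fact m)) <> 0) by (apply RtoC_nz; apply INR_fact_neq_0).
  assert (1 + a <> 0). { intro E. rewrite E in Hl. unfold Re in Hl; simpl in Hl. lra. }
  simpl Cpow. field. repeat split; auto.
Qed.

Lemma dps_eq t a w : (Re a > -1)%R ->
  dps (coefB t a) w = t / (1 + a) * ps (coefB t (1 + a)) w.
Proof.
  intros Ha. assert (Hl : (Re (1 + a) > -1)%R) by (unfold Re in *; simpl; lra).
  pose proof (coefB_bound t (1 + a) Hl) as Hb.
  pose proof (coefB_bound t a Ha) as Hb0.
  assert (HA : (0 <= Cmod t / Rmin (Re (1 + (1 + a))) 1)%R).
  { apply Rdiv_le_0_compat. apply Cmod_ge_0. apply Rmin_glb_lt. unfold Re in *; simpl in *; lra. lra. }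
  assert (HA0 : (0 <= Cmod t / Rmin (Re (1 + a)) 1)%R).
  { apply Rdiv_le_0_compat. apply Cmod_ge_0. apply Rmin_glb_lt. unfold Re in *; simpl in *; lra. lra. }
  unfold dps. rewrite CSeries_incr by (apply (absum_dps _ _ HA0 Hb0)).
  unfold ps. rewrite <- CSeries_scal by (apply (absum_ps _ _ HA Hb)).
  replace (coefB t a 0 * INR 0 * w ^ Init.Nat.pred 0) with (RtoC 0) by (simpl; ring).
  rewrite Cplus_0_l. apply CSeries_ext. intros m.
  simpl pred. rewrite coefB_shift by auto. ring.
Qed.

Lemma ps_derive_shift t a s z : (Re a > -1)%R ->
  is_derive (fun z => ps (coefB t a) (z + s)) z (t / (1 + a) * ps (coefB t (1 + a)) (z + s)).
Proof.
  intros Ha.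
  assert (HA0 : (0 <= Cmod t / Rmin (Re (1 + a)) 1)%R).
  { apply Rdiv_le_0_compat. apply Cmod_ge_0. apply Rmin_glb_lt. unfold Re in *; simpl in *; lra. lra. }
  rewrite <- dps_eq by auto.
  pose proof (ps_derive _ _ HA0 (coefB_bound t a Ha) (z + s)) as H.
  assert (Hg : is_derive (fun z : C_AbsRing => plus z s) z (plus one zero)).
  { apply (is_derive_plus (fun z : C_AbsRing => z) (fun _ : C_AbsRing => s)). apply is_derive_id. apply (@is_derive_const C_AbsRing (AbsRing_NormedModule C_AbsRing) s z). }
  pose proof (is_derive_comp (ps (coefB t a)) (fun z : C_AbsRing => plus z s) z _ _ H Hg) as H2.
  rewrite plus_zero_r, scal_one in H2. exact H2.
Qed.

Lemma derive_transfer (f : C -> C) x l : @is_derive C_AbsRing C_NormedModule f x l ->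
  @is_derive C_AbsRing (AbsRing_NormedModule C_AbsRing) f x l.
Proof. intros [H1 H2]. split. apply is_linear_scal_l. intros y Hy. exact (H2 y Hy). Qed.
Lemma derive_transfer' (f : C -> C) x l : @is_derive C_AbsRing (AbsRing_NormedModule C_AbsRing) f x l ->
  @is_derive C_AbsRing C_NormedModule f x l.
Proof. intros [H1 H2]. split. apply is_linear_scal_l. intros y Hy. exact (H2 y Hy). Qed.

Theorem mainTheorem5 (alpha beta t : C) :
  (Re alpha > -1)%R -> (Re beta > -1)%R ->
  forall z : C, (Cmod z < 1)%R ->
  exists d : C,
    @is_derive C_AbsRing C_NormedModule (Bfun t alpha beta) z d /\
    d - t / (1 + alpha) * Bfun t (1 + alpha) beta z
      - t / (1 + beta) * Bfun t alpha (1 + beta) z = 0.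
Proof.
  intros Ha Hb z _.
  pose proof (ps_derive_shift t alpha (Copp 1) z Ha) as Hf.
  pose proof (ps_derive_shift t beta 1 z Hb) as Hg.
  assert (Hf' : @is_derive C_AbsRing (AbsRing_NormedModule C_AbsRing) (fun z : C_AbsRing => ps (coefB t alpha) (z + - (1))) z
    (t / (1 + alpha) * ps (coefB t (1 + alpha)) (z + - (1)))) by (apply derive_transfer; exact Hf).
  assert (Hg' : @is_derive C_AbsRing (AbsRing_NormedModule C_AbsRing) (fun z : C_AbsRing => ps (coefB t beta) (z + 1)) z
    (t / (1 + beta) * ps (coefB t (1 + beta)) (z + 1))) by (apply derive_transfer; exact Hg).
  pose proof (is_derive_mult _ _ z _ _ Hf' Hg' Cmult_comm) as Hm.
  eexists. split.
  - apply derive_transfer'. eapply is_derive_ext; [|exact Hm]. intros y. simpl. unfold Bfun. rewrite !CS_ps. reflexivity.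
  - unfold Bfun. rewrite !CS_ps. change (plus ?x ?y) with (Cplus x y). change (mult ?x ?y) with (Cmult x y).
    change (z + - (1)) with (z - 1). match goal with |- ?l = ?r => change (@eq C l r) end. ring.
Qed.
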